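(* Let $\psi^a_A$ be smooth fields on Minkowski space with values in the odd part of $\Lambda$, and let $A_\mu$ be a smooth gauge potential as in the context. Define $\mathcal{J}^{ab}$, $C_\mu^{ab}$, $\mathcal{X}^2$ and $\mathcal{J}^2$ as in the context. Then for all $\mu$ and all bispinor indices $a,b$: $$ \mathcal{X}^2\big(C_\mu^{ab}+\partial_\mu\mathcal{J}^{ab}\big) = -4\big(C_\mu^{cb}+\partial_\mu\mathcal{J}^{cb}\big)\beta_{cf}\Big(\mathcal{J}^2\mathcal{J}^{af}+2\beta_{ghde}\mathcal{J}^{gd}\mathcal{J}^{hf}\mathcal{J}^{ae}\Big) -8\big(C_\mu^{gb}+\partial_\mu\mathcal{J}^{gb}\big)\beta_{cf}\beta_{ghde}\Big(\mathcal{J}^{he}\mathcal{J}^{cf}\mathcal{J}^{ad}+\mathcal{J}^{cd}\mathcal{J}^{hf}\mathcal{J}^{ae}+\mathcal{J}^{hd}\mathcal{J}^{ce}\mathcal{J}^{af}\Big). $$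
   Context: Summation over repeated indices is understood. Colour indices $A,B,\dots\in\{1,2,3\}$; bispinor indices $a,b,\dots\in\{1,2,\dot1,\dot2\}$ (ordered in this way); spacetime indices $\mu,\nu\in\{0,1,2,3\}$, raised/lowered with $\eta=\mathrm{diag}(1,-1,-1,-1)$. $\Lambda$ is the complex Grassmann algebra generated by the 24 anticommuting generators $\psi^a_A,\overline{\psi^a_A}$, equipped with the antilinear involution (complex conjugation) $x\mapsto\bar x$ exchanging $\psi^a_A$ and $\overline{\psi^a_A}$ and satisfying $\overline{xy}=\bar y\,\bar x$; quark fields are $\Lambda$-valued fields on spacetime whose components $\psi^a_A$ are odd. $g^{AB}=\delta^{AB}$ is the Hermitian colour metric and $\epsilon^{ABC}$ the totally antisymmetric symbol with $\epsilon^{123}=1$. The gauge potential $A_{\mu A}{}^{B}$ is a smooth field of Hermitian $3\times3$ matrices ($\overline{A_{\mu A}{}^B}=A_{\mu B}{}^A$), $g$ is a nonzero real coupling constant, $D_\mu\psi^a_A=\partial_\mu\psi^a_A+ig\,A_{\mu A}{}^B\psi^a_B$, and $\overline{D_\mu\psi^a_A}$ is its conjugate. Spinor structures: $\sigma^\mu=(I,\sigma^1,\sigma^2,\sigma^3)$, $\tilde\sigma^\mu=(I,-\sigma^1,-\sigma^2,-\sigma^3)$ with $\sigma^k$ the Pauli matrices; in the ordering $(1,2,\dot1,\dot2)$, $(\gamma^\mu)^a{}_b=\begin{pmatrix}0&\tilde\sigma^\mu\\ \sigma^\mu&0\end{pmatrix}$, $\epsilon_{ab}=\begin{pmatrix}\varepsilon&0\\0&-\varepsilon\end{pmatrix}$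 with $\varepsilon=\begin{pmatrix}0&1\\-1&0\end{pmatrix}$, $(\gamma^\mu)_{cb}:=(\gamma^\mu)^a{}_b\epsilon_{ac}$, and the Hermitian form $\beta_{ab}=\begin{pmatrix}0&I_2\\ I_2&0\end{pmatrix}$. Define $\beta_{abcd}:=\tfrac12\overline{(\gamma_\mu)_{ab}}(\gamma^\mu)_{cd}$ (symmetric in $(a,b)$ and in $(c,d)$). Gauge invariants: $\mathcal{J}^{ab}:=\overline{\psi^a_A}g^{AB}\psi^b_B$, $C_\mu^{ab}:=\overline{\psi^a_A}g^{AB}(D_\mu\psi^b_B)-(\overline{D_\mu\psi^a_A})g^{AB}\psi^b_B$, $\mathcal{J}^2:=\mathcal{J}^{ab}\beta_{acbd}\mathcal{J}^{cd}$, and $\mathcal{X}^2:=4\beta_{bcef}\beta_{ad}\{\mathcal{J}^{ad}\mathcal{J}^{be}\mathcal{J}^{cf}+2\mathcal{J}^{ae}\mathcal{J}^{bf}\mathcal{J}^{cd}\}$. *)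

(* Defs.v *)
From HB Require Import structures.
From mathcomp Require Import all_boot all_order all_algebra.
From mathcomp Require Import complex.
From mathcomp Require Import all_classical all_reals all_analysis.
Set Implicit Arguments. Unset Strict Implicit. Unset Printing Implicit Defensive.
Import Order.TTheory GRing.Theory Num.Theory.
Local Open Scope ring_scope.

Section Defs.
Variable R : realType.
Local Notation C := R[i].

(* The complex Grassmann algebra Lambda on 24 generators e_0..e_23.    *)
(* An element is the family of its coefficients on the monomials       *)
(* e_S = e_{s1} e_{s2} ... e_{sk}  (s1 < s2 < ... < sk), S a subset.   *)
(* Generators e_i and e_(i+12 mod 24) are exchanged by conjugation     *)
(* (they play the roles of psi^a_A and its conjugate).                 *)
Definition Gen := 'I_24.
Definition Lam := {ffun {set Gen} -> C}.

(* sign of e_S e_T = gsign S T * e_(S :|: T) for disjoint S T *)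
Definition gsign (S T : {set Gen}) : C :=
  (-1) ^+ #|[set p : Gen * Gen | [&& p.1 \in S, p.2 \in T & (p.2 < p.1)%N]]|.

Definition gmul (x y : Lam) : Lam :=
  [ffun U => \sum_(S : {set Gen}) \sum_(T : {set Gen} | [disjoint S & T] && (S :|: T == U))
               gsign S T * x S * y T].

Definition gscal (c : C) (x : Lam) : Lam := [ffun S => c * x S].

Definition gone : Lam := [ffun S => (S == finset.set0)%:R].
Definition gen (i : Gen) : Lam := [ffun S => (S == finset.set1 i)%:R].

Definition gbar (i : Gen) : Gen := inord ((i + 12) %% 24).

Definition conj_mono (S : {set Gen}) : Lam :=
  foldr gmul gone [seq gen (gbar i) | i <- rev (enum S)].

Definition gconj (x : Lam) : Lam :=
  \sum_(S : {set Gen}) gscal (conjc (x S)) (conj_mono S).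

Definition is_odd (x : Lam) : Prop := forall S : {set Gen}, ~~ odd #|S| -> x S = 0.

Definition evec (mu : 'I_4) : 'rV[R]_4 := delta_mx 0 mu.

Definition dL (mu : 'I_4) (F : 'rV[R]_4 -> Lam) (x : 'rV[R]_4) : Lam :=
  [ffun S => Complex ('D_(evec mu) (fun y => complex.Re (F y S)) x)
                     ('D_(evec mu) (fun y => complex.Im (F y S)) x)].

Definition diff_field (F : 'rV[R]_4 -> Lam) : Prop :=
  forall (x : 'rV[R]_4) (mu : 'I_4) (S : {set Gen}),
    derivable (fun y => complex.Re (F y S)) x (evec mu) /\
    derivable (fun y => complex.Im (F y S)) x (evec mu).

(* Spinor structures. Bispinor indices 'I_4 ordered (1,2,1dot,2dot).   *)
Definition iC : C := Complex 0 1.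

Definition sigm (mu : 'I_4) (i j : nat) : C :=
  match nat_of_ord mu, i, j with
  | 0, 0, 0 => 1 | 0, 1, 1 => 1
  | 1, 0, 1 => 1 | 1, 1, 0 => 1
  | 2, 0, 1 => - iC | 2, 1, 0 => iC
  | 3, 0, 0 => 1 | 3, 1, 1 => -1
  | _, _, _ => 0
  end.
Definition sigmt (mu : 'I_4) (i j : nat) : C :=
  if nat_of_ord mu == 0%N then sigm mu i j else - sigm mu i j.

Definition gam (mu a b : 'I_4) : C :=
  if ((a < 2) && (2 <= b))%N then sigmt mu a (b - 2)
  else if ((2 <= a) && (b < 2))%N then sigm mu (a - 2) b
  else 0.

Definition eps2 (i j : nat) : C :=
  match i, j with 0, 1 => 1 | 1, 0 => -1 | _, _ => 0 end.
Definition eps4 (a b : 'I_4) : C :=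
  if ((a < 2) && (b < 2))%N then eps2 a b
  else if ((2 <= a) && (2 <= b))%N then - eps2 (a - 2) (b - 2)
  else 0.

Definition gamlow (mu c b : 'I_4) : C := \sum_(a < 4) gam mu a b * eps4 a c.

Definition eta (mu nu : 'I_4) : C :=
  if mu == nu then (if nat_of_ord mu == 0%N then 1 else -1) else 0.

Definition beta2 (a b : 'I_4) : C :=
  (((a < 2) && (2 <= b) && (nat_of_ord a == b - 2)) ||
   ((2 <= a) && (b < 2) && (a - 2 == nat_of_ord b)))%N%:R.

Definition beta4 (a b c d : 'I_4) : C :=
  2^-1 * \sum_(mu < 4)
    conjc (\sum_(nu < 4) eta mu nu * gamlow nu a b) * gamlow mu c d.

(* Gauge invariants. psi a A x = psi^a_A(x); Amu mu x A B = A_{mu A}^B(x). *)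
Definition Field := 'I_4 -> 'I_3 -> 'rV[R]_4 -> Lam.
Definition Gauge := 'I_4 -> 'rV[R]_4 -> 'M[C]_3.

Definition Dpsi (g : R) (Amu : Gauge) (psi : Field) (mu a : 'I_4) (A : 'I_3)
  (x : 'rV[R]_4) : Lam :=
  dL mu (psi a A) x + \sum_(B < 3) gscal (iC * (Complex g 0) * Amu mu x A B) (psi a B x).

(* J^{ab} = psibar^a_A g^{AB} psi^b_B with g^{AB} = delta^{AB} *)
Definition Jc (psi : Field) (a b : 'I_4) (x : 'rV[R]_4) : Lam :=
  \sum_(A < 3) gmul (gconj (psi a A x)) (psi b A x).

Definition Cmu (g : R) (Amu : Gauge) (psi : Field) (mu a b : 'I_4) (x : 'rV[R]_4)
  : Lam :=
  \sum_(A < 3) (gmul (gconj (psi a A x)) (Dpsi g Amu psi mu b A x)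
               - gmul (gconj (Dpsi g Amu psi mu a A x)) (psi b A x)).

Definition Kc (g : R) (Amu : Gauge) (psi : Field) (mu a b : 'I_4) (x : 'rV[R]_4)
  : Lam :=
  Cmu g Amu psi mu a b x + dL mu (Jc psi a b) x.

Definition J2 (psi : Field) (x : 'rV[R]_4) : Lam :=
  \sum_(a < 4) \sum_(b < 4) \sum_(c < 4) \sum_(d < 4)
    gscal (beta4 a c b d) (gmul (Jc psi a b x) (Jc psi c d x)).

Definition X2 (psi : Field) (x : 'rV[R]_4) : Lam :=
  gscal 4 (\sum_(a < 4) \sum_(b < 4) \sum_(c < 4) \sum_(d < 4) \sum_(e < 4) \sum_(f < 4)
    gscal (beta4 b c e f * beta2 a d)
      (gmul (gmul (Jc psi a d x) (Jc psi b e x)) (Jc psi c f x)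
       + gscal 2 (gmul (gmul (Jc psi a e x) (Jc psi b f x)) (Jc psi c d x)))).

End Defs.
Arguments beta2 {R}.
Arguments beta4 {R}.

(* Main.v *)
Require Import Defs.
From HB Require Import structures.
From mathcomp Require Import all_boot all_order all_algebra.
From mathcomp Require Import complex.
From mathcomp Require Import all_classical all_reals all_analysis.
From mathcomp Require Import ring zify.
Import Order.TTheory GRing.Theory Num.Theory.
Local Open Scope ring_scope.
Set Implicit Arguments. Unset Strict Implicit. Unset Printing Implicit Defensive.

Section GA.
Variable R : realType.
Local Notation C := R[i].
Local Notation L := (Lam R).
Implicit Types (x y z : L) (S T U W : {set Gen}).

Definition eb S : L := [ffun U => (U == S)%:R].
Definition ginv S T :=
  #|[set p : Gen * Gen | [&& p.1 \in S, p.2 \in T & (p.2 < p.1)%N]]|.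

Lemma addLE x y S : (x + y) S = x S + y S.
Proof. exact: ffunE. Qed.
Lemma oppLE x S : (- x) S = - x S.
Proof. exact: ffunE. Qed.
Lemma zeroLE S : (0 : L) S = 0.
Proof. exact: ffunE. Qed.
Lemma subLE x y S : (x - y) S = x S - y S.
Proof. by rewrite addLE oppLE. Qed.

Lemma gmulE x y U : gmul x y U = \sum_(S : {set Gen}) \sum_(T : {set Gen} | [disjoint S & T] && (S :|: T == U))
   gsign R S T * x S * y T.
Proof. by rewrite /gmul ffunE. Qed.

Lemma gscalE c x U : gscal c x U = c * x U.
Proof. by rewrite /gscal ffunE. Qed.

Lemma gmulDl x y z : gmul (x + y) z = gmul x z + gmul y z.
Proof.
apply/ffunP => U; rewrite !gmulE !ffunE ?gmulE -big_split; apply eq_bigr => S _.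
rewrite -big_split; apply eq_bigr => T _; by rewrite addLE mulrDr mulrDl.
Qed.

Lemma gmulDr x y z : gmul x (y + z) = gmul x y + gmul x z.
Proof.
apply/ffunP => U; rewrite !gmulE !ffunE ?gmulE -big_split; apply eq_bigr => S _.
rewrite -big_split; apply eq_bigr => T _; by rewrite addLE mulrDr.
Qed.

Lemma gmul0l y : gmul 0 y = 0.
Proof.
apply/ffunP => U; rewrite gmulE ffunE big1 // => S _; rewrite big1 // => T _.
by rewrite zeroLE mulr0 mul0r.
Qed.

Lemma gmul0r y : gmul y 0 = 0.
Proof.
apply/ffunP => U; rewrite gmulE ffunE big1 // => S _; rewrite big1 // => T _.
by rewrite zeroLE mulr0.
Qed.

Lemma gmulZl c x y : gmul (gscal c x) y = gscal c (gmul x y).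
Proof.
apply/ffunP => U; rewrite gscalE !gmulE mulr_sumr; apply eq_bigr => S _.
rewrite mulr_sumr; apply eq_bigr => T _; rewrite gscalE; ring.
Qed.

Lemma gmulZr c x y : gmul x (gscal c y) = gscal c (gmul x y).
Proof.
apply/ffunP => U; rewrite gscalE !gmulE mulr_sumr; apply eq_bigr => S _.
rewrite mulr_sumr; apply eq_bigr => T _; rewrite gscalE; ring.
Qed.

Lemma gmulNl x y : gmul (- x) y = - gmul x y.
Proof. by apply/eqP; rewrite -addr_eq0 -gmulDl addNr gmul0l. Qed.
Lemma gmulNr x y : gmul x (- y) = - gmul x y.
Proof. by apply/eqP; rewrite -addr_eq0 -gmulDr addNr gmul0r. Qed.
Lemma gmulBl x y z : gmul (x - y) z = gmul x z - gmul y z.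
Proof. by rewrite gmulDl gmulNl. Qed.
Lemma gmulBr x y z : gmul x (y - z) = gmul x y - gmul x z.
Proof. by rewrite gmulDr gmulNr. Qed.

Lemma gmul_suml I (r : seq I) (P : pred I) (F : I -> L) y :
  gmul (\sum_(i <- r | P i) F i) y = \sum_(i <- r | P i) gmul (F i) y.
Proof. by apply: (big_morph (fun a => gmul a y)) => [a b|]; rewrite ?gmulDl ?gmul0l. Qed.

Lemma gmul_sumr I (r : seq I) (P : pred I) (F : I -> L) y :
  gmul y (\sum_(i <- r | P i) F i) = \sum_(i <- r | P i) gmul y (F i).
Proof. by apply: (big_morph (fun a => gmul y a)) => [a b|]; rewrite ?gmulDr ?gmul0r. Qed.

Lemma gscalA c d x : gscal c (gscal d x) = gscal (c * d) x.
Proof. by apply/ffunP => U; rewrite !gscalE mulrA. Qed.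
Lemma gscal0 x : gscal 0 x = 0.
Proof. by apply/ffunP => U; rewrite !ffunE mul0r. Qed.
Lemma gscalx0 c : gscal c (0 : L) = 0.
Proof. by apply/ffunP => U; rewrite !ffunE mulr0. Qed.
Lemma gscal1 x : gscal 1 x = x.
Proof. by apply/ffunP => U; rewrite !ffunE mul1r. Qed.
Lemma gscalDr c x y : gscal c (x + y) = gscal c x + gscal c y.
Proof. by apply/ffunP => U; rewrite !ffunE mulrDr. Qed.
Lemma gscalDl c d x : gscal (c + d) x = gscal c x + gscal d x.
Proof. by apply/ffunP => U; rewrite !ffunE mulrDl. Qed.
Lemma gscalNr c x : gscal c (- x) = - gscal c x.
Proof. by apply/ffunP => U; rewrite !ffunE mulrN. Qed.
Lemma gscalNl c x : gscal (- c) x = - gscal c x.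
Proof. by apply/ffunP => U; rewrite !ffunE mulNr. Qed.
Lemma gscalBr c x y : gscal c (x - y) = gscal c x - gscal c y.
Proof. by rewrite gscalDr gscalNr. Qed.
Lemma gscal_sumr I (r : seq I) (P : pred I) (F : I -> L) c :
  gscal c (\sum_(i <- r | P i) F i) = \sum_(i <- r | P i) gscal c (F i).
Proof. by apply: (big_morph (gscal c)) => [a b|]; rewrite ?gscalDr ?gscalx0. Qed.
Lemma gscal_suml I (r : seq I) (P : pred I) (F : I -> C) x :
  gscal (\sum_(i <- r | P i) F i) x = \sum_(i <- r | P i) gscal (F i) x.
Proof. by apply: (big_morph (fun c => gscal c x)) => [a b|]; rewrite ?gscalDl ?gscal0. Qed.

Lemma expand x : x = \sum_(S : {set Gen}) gscal (x S) (eb S).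
Proof.
apply/ffunP => U; rewrite sum_ffunE (bigD1 U) //= big1 ?addr0.
  by rewrite !ffunE eqxx mulr1.
by move=> S /negPf SU; rewrite !ffunE eq_sym SU mulr0.
Qed.

Lemma gmul_eb S T : gmul (eb S) (eb T) =
  if [disjoint S & T] then gscal (gsign R S T) (eb (S :|: T)) else 0.
Proof.
apply/ffunP => U; rewrite gmulE (bigD1 S) //=.
rewrite [X in _ + X]big1 ?addr0; last first.
  move=> S' /negPf SS; rewrite big1 // => T' _; by rewrite ffunE SS mulr0 mul0r.
rewrite big_mkcond (bigD1 T) //= [X in _ + X]big1 ?addr0; last first.
  move=> T' /negPf TT; case: ifP => // _; by rewrite !ffunE TT mulr0.
rewrite !ffunE !eqxx mulr1.
case dST: [disjoint S & T] => /=; last by rewrite zeroLE.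
by rewrite gscalE ffunE eq_sym; case: (U == S :|: T); rewrite ?mulr1 ?mulr0.
Qed.

Lemma gmul_bil x y :
  gmul x y = \sum_(S : {set Gen}) \sum_(T : {set Gen}) gscal (x S * y T) (gmul (eb S) (eb T)).
Proof.
have -> : gmul x y = gmul (\sum_(S : {set Gen}) gscal (x S) (eb S)) (\sum_(T : {set Gen}) gscal (y T) (eb T)).
  by rewrite -!expand.
rewrite gmul_suml; apply eq_bigr => S _.
rewrite gmulZl gmul_sumr gscal_sumr; apply eq_bigr => T _.
by rewrite gmulZr gscalA.
Qed.

Lemma disjUl S T W : [disjoint S :|: T & W] = [disjoint S & W] && [disjoint T & W].
Proof. by rewrite -!setI_eq0 finset.setIUl finset.setU_eq0. Qed.
Lemma disjUr S T W : [disjoint S & T :|: W] = [disjoint S & T] && [disjoint S & W].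
Proof. by rewrite -!setI_eq0 finset.setIUr finset.setU_eq0. Qed.

Definition pset (P : Gen -> bool) (Q : Gen -> bool) (o : bool) :=
  [set p : Gen * Gen | [&& P p.1, Q p.2 & (if o then (p.2 < p.1)%N else (p.1 < p.2)%N)]].

Lemma ginvE S T : ginv S T = #|pset (mem S) (mem T) true|.
Proof. by []. Qed.

Lemma card_psetU (P1 P2 Q1 Q2 : Gen -> bool) o :
  (forall i, ~~ (P1 i && P2 i)) -> (forall i, ~~ (Q1 i && Q2 i)) ->
  #|pset (fun i => P1 i || P2 i) (fun i => Q1 i || Q2 i) o| =
  (#|pset P1 Q1 o| + #|pset P1 Q2 o| + #|pset P2 Q1 o| + #|pset P2 Q2 o|)%N.
Proof.
move=> dP dQ.
have -> : pset (fun i => P1 i || P2 i) (fun i => Q1 i || Q2 i) o =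
   pset P1 Q1 o :|: pset P1 Q2 o :|: pset P2 Q1 o :|: pset P2 Q2 o.
  by apply/setP => p; rewrite !inE; case: (if o then _ else _); rewrite ?andbF ?andbT; case: (P1 p.1); case: (P2 p.1);
    case: (Q1 p.2); case: (Q2 p.2).
have dis (A B : {set Gen * Gen}) : A :&: B = finset.set0 -> #|A :|: B| = (#|A| + #|B|)%N.
  by move=> e; rewrite finset.cardsU e cards0 subn0.
have nP i : P1 i -> P2 i = false by move=> h; have := dP i; rewrite h; case: (P2 i).
have nQ i : Q1 i -> Q2 i = false by move=> h; have := dQ i; rewrite h; case: (Q2 i).
rewrite dis; last first.
  apply/setP => p; rewrite !inE; case h1: (P1 p.1); case h2: (Q1 p.2) => //=;
  rewrite ?(nP _ h1) ?(nQ _ h2) ?andbF //.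
rewrite dis; last first.
  apply/setP => p; rewrite !inE; case h1: (P1 p.1); case h2: (Q1 p.2) => //=;
  rewrite ?(nP _ h1) ?(nQ _ h2) ?andbF //.
rewrite dis //.
apply/setP => p; rewrite !inE; case h1: (P1 p.1); case h2: (Q1 p.2) => //=;
  rewrite ?(nP _ h1) ?(nQ _ h2) ?andbF //.
Qed.

Lemma pset0l Q o : pset (fun=> false) Q o = finset.set0.
Proof. by apply/setP => p; rewrite !inE. Qed.
Lemma pset0r P o : pset P (fun=> false) o = finset.set0.
Proof. by apply/setP => p; rewrite !inE andbF. Qed.

Lemma ginvUl S T W : [disjoint S & T] -> ginv (S :|: T) W = (ginv S W + ginv T W)%N.
Proof.
move=> dST; rewrite !ginvE.
have -> : pset (mem (S :|: T)) (mem W) true =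
   pset (fun i => (i \in S) || (i \in T)) (fun i => (i \in W) || false) true.
  by apply/setP => p; rewrite !inE orbF.
rewrite card_psetU.
- rewrite !pset0r cards0 !addn0; congr (_ + _)%N; apply: eq_card => p; rewrite !inE //.
- by move=> i; apply/negP => /andP [h1 h2]; rewrite (disjointFr dST h1) in h2.
- by move=> i; rewrite andbF.
Qed.

Lemma ginvUr S T W : [disjoint T & W] -> ginv S (T :|: W) = (ginv S T + ginv S W)%N.
Proof.
move=> dTW; rewrite !ginvE.
have -> : pset (mem S) (mem (T :|: W)) true =
   pset (fun i => (i \in S) || false) (fun i => (i \in T) || (i \in W)) true.
  by apply/setP => p; rewrite !inE orbF.
rewrite card_psetU.
- rewrite !pset0l cards0 !addn0; congr (_ + _)%N; apply: eq_card => p; rewrite !inE //.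
- by move=> i; rewrite andbF.
- by move=> i; apply/negP => /andP [h1 h2]; rewrite (disjointFr dTW h1) in h2.
Qed.

Lemma ginv_sym S T : [disjoint S & T] -> (ginv S T + ginv T S)%N = (#|S| * #|T|)%N.
Proof.
move=> dST; rewrite !ginvE -cardsX.
rewrite -[#|pset (mem T) (mem S) true|](card_preimset _ (can_inj (@swap_pairK Gen Gen))).
have -> : finset.setX S T =
   pset (mem S) (mem T) true :|: (swap_pair @^-1: pset (mem T) (mem S) true).
  apply/setP => p; rewrite !inE /=.
  case pS: (p.1 \in S); case pT: (p.2 \in T) => //=.
  have : p.1 != p.2.
    by apply/eqP => e; rewrite e in pS; rewrite (disjointFr dST pS) in pT.
  by rewrite neq_ltn orbC.
rewrite finset.cardsU; have -> : pset (mem S) (mem T) true :&: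
    (swap_pair @^-1: pset (mem T) (mem S) true) = finset.set0.
  apply/setP => p; rewrite !inE /=.
  case: (p.1 \in S); case: (p.2 \in T); rewrite //= ?andbF //.
  by case: ltngtP.
by rewrite cards0 subn0.
Qed.

Lemma gsignE S T : gsign R S T = (-1) ^+ ginv S T.
Proof. by []. Qed.

Lemma gmul_eb3 S T W :
  gmul (gmul (eb S) (eb T)) (eb W) = gmul (eb S) (gmul (eb T) (eb W)).
Proof.
rewrite [gmul (eb S) (eb T)]gmul_eb [gmul (eb T) (eb W)]gmul_eb.
case dST: [disjoint S & T]; case dTW: [disjoint T & W];
  rewrite ?gmul0l ?gmul0r ?gmulZl ?gmulZr ?gmul_eb ?disjUl ?disjUr ?dST ?dTW /=
    ?andbF ?gscalx0 //.
case dSW: [disjoint S & W]; rewrite ?gscalx0 // !gscalA finset.setUA; congr gscal.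
rewrite !gsignE ginvUl // ginvUr // -!exprD; congr (_ ^+ _).
by rewrite addnA [(_ + ginv T W)%N]addnC.
Qed.

Lemma gmulA x y z : gmul (gmul x y) z = gmul x (gmul y z).
Proof.
have H2 S T z' : gmul (gmul (eb S) (eb T)) z' = gmul (eb S) (gmul (eb T) z').
  rewrite (expand z') !gmul_sumr; apply eq_bigr => W _.
  by rewrite !gmulZr gmul_eb3.
have H1 S y' z' : gmul (gmul (eb S) y') z' = gmul (eb S) (gmul y' z').
  rewrite (expand y') gmul_sumr !gmul_suml gmul_sumr; apply eq_bigr => T _.
  by rewrite gmulZr !gmulZl gmulZr H2.
rewrite (expand x) !gmul_suml; apply eq_bigr => S _.
by rewrite !gmulZl H1.
Qed.

Definition par (p : bool) (x : L) := forall S, odd #|S| != p -> x S = 0.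

Lemma is_oddP x : is_odd x <-> par true x.
Proof.
split=> h S; [move=> hS; apply: h; by case: (odd #|S|) hS | move=> hS; apply: h].
by case: (odd #|S|) hS.
Qed.

Lemma par0 p : par p 0.
Proof. by move=> S _; rewrite zeroLE. Qed.
Lemma parD p x y : par p x -> par p y -> par p (x + y).
Proof. by move=> hx hy S hS; rewrite addLE hx // hy // addr0. Qed.
Lemma parN p x : par p x -> par p (- x).
Proof. by move=> hx S hS; rewrite oppLE hx // oppr0. Qed.
Lemma parZ p c x : par p x -> par p (gscal c x).
Proof. by move=> hx S hS; rewrite gscalE hx // mulr0. Qed.
Lemma par_sum p I (r : seq I) (P : pred I) (F : I -> L) :
  (forall i, P i -> par p (F i)) -> par p (\sum_(i <- r | P i) F i).
Proof. by move=> h; apply: big_ind => //; [exact: par0 | exact: parD]. Qed.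

Lemma cardsU_disj S T : [disjoint S & T] -> #|S :|: T| = (#|S| + #|T|)%N.
Proof. by move=> d; rewrite finset.cardsU; move: d; rewrite -setI_eq0 => /eqP ->; rewrite cards0 subn0. Qed.

Lemma par_mul p q x y : par p x -> par q y -> par (p (+) q) (gmul x y).
Proof.
move=> hx hy U hU; rewrite gmulE big1 // => S _; rewrite big1 // => T /andP [d /eqP e].
case: (eqVneq (odd #|S|) p) => hS; last by rewrite hx // mulr0 mul0r.
case: (eqVneq (odd #|T|) q) => hT; last by rewrite hy // mulr0.
by move: hU; rewrite -e cardsU_disj // oddD hS hT eqxx.
Qed.

Lemma eb_par S : par (odd #|S|) (eb S).
Proof. by move=> U hU; rewrite ffunE; case: eqP => // e; rewrite e eqxx in hU. Qed.

Lemma gen_eb i : gen R i = eb [set i].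
Proof. by []. Qed.

Lemma gone_eb : gone R = eb finset.set0.
Proof. by []. Qed.

Lemma par_gen i : par true (gen R i).
Proof. by rewrite gen_eb; have := @eb_par [set i]; rewrite cards1. Qed.

Lemma par_gone : par false (gone R).
Proof. by rewrite gone_eb; have := @eb_par finset.set0; rewrite cards0. Qed.

Lemma par_foldr (l : seq Gen) :
  par (odd (size l)) (foldr (@gmul R) (gone R) [seq gen R (gbar i) | i <- l]).
Proof.
elim: l => [|i l IH] /=; first exact: par_gone.
by have := par_mul (par_gen (gbar i)) IH; rewrite /= ?addTb. 
Qed.

Lemma par_conj_mono S : par (odd #|S|) (conj_mono R S).
Proof. by have := @par_foldr (rev (enum S)); rewrite size_rev -cardE. Qed.

Lemma gconj_odd x : is_odd x -> is_odd (gconj x).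
Proof.
rewrite !is_oddP => hx; apply: par_sum => S _.
case: (eqVneq (odd #|S|) true) => hS.
  by apply: parZ; rewrite -hS; apply: par_conj_mono.
by rewrite hx // conjc0 gscal0; apply: par0.
Qed.

Lemma gconjD x y : gconj (x + y) = gconj x + gconj y.
Proof.
rewrite /gconj -big_split; apply eq_bigr => S _.
by rewrite addLE rmorphD gscalDl.
Qed.
Lemma gconj0 : gconj (0 : L) = 0.
Proof. by rewrite /gconj big1 // => S _; rewrite zeroLE conjc0 gscal0. Qed.
Lemma gconjN x : gconj (- x) = - gconj x.
Proof. by apply/eqP; rewrite -addr_eq0 -gconjD addNr gconj0. Qed.
Lemma gconjZ c x : gconj (gscal c x) = gscal (conjc c) (gconj x).
Proof.
rewrite /gconj gscal_sumr; apply eq_bigr => S _.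
by rewrite gscalE rmorphM gscalA.
Qed.
Lemma gconj_sum I (r : seq I) (P : pred I) (F : I -> L) :
  gconj (\sum_(i <- r | P i) F i) = \sum_(i <- r | P i) gconj (F i).
Proof. by apply: (big_morph (@gconj R)) => [a b|]; rewrite ?gconjD ?gconj0. Qed.

Lemma ginv0l T : ginv finset.set0 T = 0%N.
Proof. by rewrite ginvE; apply/eqP; rewrite cards_eq0; apply/eqP/setP => p; rewrite !inE. Qed.
Lemma ginv0r T : ginv T finset.set0 = 0%N.
Proof. by rewrite ginvE; apply/eqP; rewrite cards_eq0; apply/eqP/setP => p; rewrite !inE andbF. Qed.

Lemma gmul1l x : gmul (gone R) x = x.
Proof.
rewrite [in LHS](expand x) [in RHS](expand x) gmul_sumr; apply eq_bigr => T _.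
rewrite gmulZr gone_eb gmul_eb.
try (have -> : [disjoint finset.set0 & T] by rewrite -setI_eq0 finset.set0I).
by rewrite gscalA gsignE ginv0l expr0 mulr1 finset.set0U.
Qed.

Lemma gmul1r x : gmul x (gone R) = x.
Proof.
rewrite [in LHS](expand x) [in RHS](expand x) gmul_suml; apply eq_bigr => T _.
rewrite gmulZl gone_eb gmul_eb.
try (have -> : [disjoint T & finset.set0] by rewrite -setI_eq0 finset.setI0).
by rewrite gscalA gsignE ginv0r expr0 mulr1 finset.setU0.
Qed.

Lemma gsign_anti S T : [disjoint S & T] -> odd #|S| -> odd #|T| ->
  gsign R S T = - gsign R T S.
Proof.
move=> d oS oT; have := ginv_sym d; rewrite !gsignE => h.
have e1 : (-1 : C) ^+ (ginv S T + ginv T S) = -1.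
  by rewrite h -signr_odd oddM oS oT expr1.
have e2 : (-1 : C) ^+ ginv T S * (-1) ^+ ginv T S = 1.
  by rewrite -exprD addnn -signr_odd odd_double expr0.
have -> : (-1 : C) ^+ ginv S T = (-1) ^+ ginv S T * ((-1) ^+ ginv T S * (-1) ^+ ginv T S).
  by rewrite e2 mulr1.
by rewrite mulrA -exprD e1 mulN1r.
Qed.

Lemma gmul_odd_anti x y : par true x -> par true y -> gmul x y = - gmul y x.
Proof.
move=> hx hy; rewrite !gmul_bil (exchange_big _ _ _ _ _ (fun S T => gscal (y S * x T) (gmul (eb S) (eb T)))) /= -sumrN.
apply eq_bigr => S _; rewrite -sumrN; apply eq_bigr => T _.
case: (eqVneq (odd #|S|) true) => hS; last by rewrite hx // !mul0r mulr0 !gscal0 oppr0.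
case: (eqVneq (odd #|T|) true) => hT; last by rewrite hy // !mul0r mulr0 !gscal0 oppr0.
rewrite !gmul_eb [[disjoint T & S]]disjoint_sym; case: ifP => d; last by rewrite !gscalx0 oppr0.
rewrite !gscalA -gscalNl [T :|: S]finset.setUC (gsign_anti d) //; congr gscal; ring.
Qed.

Lemma gmul_odd_sq x : par true x -> gmul x x = 0.
Proof.
move=> hx; have e := gmul_odd_anti hx hx.
apply/ffunP => U; rewrite zeroLE; have := congr1 (fun f : L => f U) e.
rewrite oppLE => /eqP; rewrite -addr_eq0 -mulr2n mulrn_eq0 /= => /eqP //.
Qed.

End GA.

Definition zeqz (c : int) : bool := match c with Posz 0 => true | _ => false end.

Fixpoint insw (i : nat) (w : seq nat) : option (bool * seq nat) :=
  match w with
  | [::] => Some (false, [:: i])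
  | j :: w' => if (i < j)%N then Some (false, i :: w)
               else if Nat.eqb i j then None
               else match insw i w' with
                    | None => None
                    | Some (s, w'') => Some (~~ s, j :: w'')
                    end
  end.

Fixpoint nw (w : seq nat) : option (bool * seq nat) :=
  match w with
  | [::] => Some (false, [::])
  | i :: w' => match nw w' with
               | None => None
               | Some (s, w'') => match insw i w'' with
                                  | None => None
                                  | Some (s', w3) => Some (s (+) s', w3)
                                  end
               end
  end.

Fixpoint weq (u w : seq nat) : bool :=
  match u, w with
  | [::], [::] => true
  | i :: u', j :: w' => Nat.eqb i j && weq u' w'
  | _, _ => false
  end.

Fixpoint wlt (u w : seq nat) : bool :=
  match u, w with
  | [::], [::] => false
  | [::], _ => true
  | _, [::] => false
  | i :: u', j :: w' => (i < j)%N || (Nat.eqb i j && wlt u' w')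
  end.

Definition poly := seq (int * seq nat).

Fixpoint pins (c : int) (w : seq nat) (p : poly) : poly :=
  match p with
  | [::] => [:: (c, w)]
  | (c', w') :: p' =>
     if weq w w' then (if zeqz (c + c') then p' else (c + c', w') :: p')
     else if wlt w w' then (c, w) :: p
     else (c', w') :: pins c w p'
  end.

Fixpoint padd (p : poly) : poly -> poly :=
  match p with
  | [::] => fun q => q
  | (c, w) :: p' =>
    fix inner (q : poly) : poly :=
      match q with
      | [::] => p
      | (c', w') :: q' =>
        if weq w w' then (if zeqz (c + c') then padd p' q' else (c + c', w) :: padd p' q')
        else if wlt w w' then (c, w) :: padd p' q
        else (c', w') :: inner q'
      end
  end.
Definition sgnz (s : bool) : int := if s then -1 else 1.
Definition prow (t : int * seq nat) (q : poly) : poly :=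
  foldr (fun u acc2 =>
     match nw (t.2 ++ u.2) with
     | None => acc2
     | Some (s, w) => pins (sgnz s * t.1 * u.1) w acc2
     end) [::] q.
Definition pmul (p q : poly) : poly := foldr (fun t acc => padd (prow t q) acc) [::] p.
Definition pscal (c : int) (p : poly) : poly :=
  if zeqz c then [::] else [seq (c * t.1, t.2) | t <- p].

Definition o40 : 'I_4 := @Ordinal 4 0 isT.
Definition o41 : 'I_4 := @Ordinal 4 1 isT.
Definition o42 : 'I_4 := @Ordinal 4 2 isT.
Definition o43 : 'I_4 := @Ordinal 4 3 isT.
Definition o30 : 'I_3 := @Ordinal 3 0 isT.
Definition o31 : 'I_3 := @Ordinal 3 1 isT.
Definition o32 : 'I_3 := @Ordinal 3 2 isT.
Definition ords4 := [:: o40; o41; o42; o43].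
Definition ords3 := [:: o30; o31; o32].

Inductive coef := CNat of nat | CNeg of coef | CMul of coef & coef
  | CB2 of 'I_4 & 'I_4 | CB4 of 'I_4 & 'I_4 & 'I_4 & 'I_4.

Inductive E := EV of nat & 'I_4 & 'I_3 | EK of 'I_4 & 'I_4
  | EAdd of E & E | ESub of E & E | EMul of E & E | EScal of coef & E
  | ESum4 of ('I_4 -> E) | ESum3 of ('I_3 -> E).

Definition b2cond (a b : 'I_4) : bool :=
  (((a < 2) && (2 <= b) && (nat_of_ord a == b - 2)) ||
   ((2 <= a) && (b < 2) && (a - 2 == nat_of_ord b)))%N.
Definition b2c (a b : 'I_4) : int := Posz (nat_of_bool (b2cond a b)).
Definition b4list : seq (nat * nat * nat * nat) :=
  [:: (0,2,0,2); (0,2,2,0); (0,3,1,2); (0,3,2,1); (1,2,0,3); (1,2,3,0); (1,3,1,3); (1,3,3,1);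
      (2,0,0,2); (2,0,2,0); (2,1,0,3); (2,1,3,0); (3,0,1,2); (3,0,2,1); (3,1,1,3); (3,1,3,1)]%N.
Definition b4n (a b c d : nat) : bool :=
  match a, b, c, d with
  | 0, 2, 0, 2 | 0, 2, 2, 0 | 0, 3, 1, 2 | 0, 3, 2, 1 | 1, 2, 0, 3 | 1, 2, 3, 0
  | 1, 3, 1, 3 | 1, 3, 3, 1 | 2, 0, 0, 2 | 2, 0, 2, 0 | 2, 1, 0, 3 | 2, 1, 3, 0
  | 3, 0, 1, 2 | 3, 0, 2, 1 | 3, 1, 1, 3 | 3, 1, 3, 1 => true
  | _, _, _, _ => false
  end%N.
Definition b4c (a b c d : 'I_4) : int := if b4n a b c d then -1 else 0.

Fixpoint cval (c : coef) : int :=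
  match c with
  | CNat n => Posz n
  | CNeg c => - cval c
  | CMul c1 c2 => cval c1 * cval c2
  | CB2 a b => b2c a b
  | CB4 a b c d => b4c a b c d
  end.

Definition code (k : nat) (a : 'I_4) (A : 'I_3) : nat := (12 * k + 3 * a + A)%N.

Fixpoint nf (kf : 'I_4 -> 'I_4 -> poly) (e : E) : poly :=
  match e with
  | EV k a A => [:: (1, [:: code k a A])]
  | EK a b => kf a b
  | EAdd e1 e2 => padd (nf kf e1) (nf kf e2)
  | ESub e1 e2 => padd (nf kf e1) (pscal (-1) (nf kf e2))
  | EMul e1 e2 => pmul (nf kf e1) (nf kf e2)
  | EScal c e => if zeqz (cval c) then [::] else pscal (cval c) (nf kf e)
  | ESum4 F => foldr (fun i acc => padd (nf kf (F i)) acc) [::] ords4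
  | ESum3 F => foldr (fun i acc => padd (nf kf (F i)) acc) [::] ords3
  end.

Definition eJ (a b : 'I_4) : E := ESum3 (fun A => EMul (EV 0 a A) (EV 1 b A)).
Definition eKf (a b : 'I_4) : E :=
  ESum3 (fun A => EScal (CNat 2) (EMul (EV 0 a A) (EV 2 b A))).
Definition kf0 (a b : 'I_4) : poly := nf (fun _ _ => [::]) (eKf a b).

Definition eJ2 : E := ESum4 (fun a => ESum4 (fun b => ESum4 (fun c => ESum4 (fun d =>
   EScal (CB4 a c b d) (EMul (eJ a b) (eJ c d)))))).
Definition eX2 : E := EScal (CNat 4) (
  ESum4 (fun a => ESum4 (fun b => ESum4 (fun c => ESum4 (fun d => ESum4 (fun e => ESum4 (fun f =>
    EScal (CMul (CB4 b c e f) (CB2 a d))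
      (EAdd (EMul (EMul (eJ a d) (eJ b e)) (eJ c f))
            (EScal (CNat 2) (EMul (EMul (eJ a e) (eJ b f)) (eJ c d))))))))))).

Definition eL (a b : 'I_4) : E := EMul eX2 (EK a b).
Definition eR (a b : 'I_4) : E :=
  ESub (EScal (CNeg (CNat 4)) (ESum4 (fun c => ESum4 (fun f =>
          EMul (EK c b) (EScal (CB2 c f)
            (EAdd (EMul eJ2 (eJ a f))
                  (EScal (CNat 2) (ESum4 (fun g0 => ESum4 (fun h => ESum4 (fun d => ESum4 (fun e =>
                     EScal (CB4 g0 h d e) (EMul (EMul (eJ g0 d) (eJ h f)) (eJ a e))))))))))))))
       (EScal (CNat 8) (ESum4 (fun g0 => ESum4 (fun c => ESum4 (fun f => ESum4 (fun h =>
          ESum4 (fun d => ESum4 (fun e =>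
            EMul (EK g0 b) (EScal (CMul (CB2 c f) (CB4 g0 h d e))
              (EAdd (EAdd (EMul (EMul (eJ h e) (eJ c f)) (eJ a d))
                          (EMul (EMul (eJ c d) (eJ h f)) (eJ a e)))
                    (EMul (EMul (eJ h d) (eJ c e)) (eJ a f)))))))))))).

Definition check (a b : 'I_4) : bool := nf kf0 (eL a b) == nf kf0 (eR a b).

Lemma check_all : all (fun a => all (fun b => check a b) ords4) ords4.
Proof. vm_compute. reflexivity. Qed.

Lemma mem_ords4 (a : 'I_4) : a \in ords4.
Proof. by case: a => [[|[|[|[|m]]]] Hm]. Qed.

Lemma check_ok (a b : 'I_4) : nf kf0 (eL a b) = nf kf0 (eR a b).
Proof.
apply/eqP; have := check_all; move/allP/(_ a (mem_ords4 a))/allP/(_ b (mem_ords4 b)).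
by [].
Qed.

Section Refl.
Variable R : realType.
Local Notation C := R[i].
Local Notation L := (Lam R).

Variable v : nat -> L.
Hypothesis vodd : forall n, par true (v n).

Definition wp (w : seq nat) : L := foldr (fun i acc => gmul (v i) acc) (gone R) w.
Definition eval (p : poly) : L := \sum_(t <- p) gscal ((t.1)%:~R) (wp t.2).
Definition sg (s : bool) : C := if s then -1 else 1.

Lemma sgzE s : ((sgnz s)%:~R : C) = sg s.
Proof. by case: s; rewrite /sgnz /sg ?rmorphN rmorph1. Qed.
Lemma sgN s : sg (~~ s) = - sg s.
Proof. by case: s; rewrite /sg ?opprK. Qed.
Lemma sgX s t : sg (s (+) t) = sg s * sg t.
Proof. by case: s; case: t; rewrite /sg ?mulr1 ?mul1r ?mulrNN ?mulr1 //. Qed.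

Lemma wp_cat u w : wp (u ++ w) = gmul (wp u) (wp w).
Proof. elim: u => [|i u IH] /=; first by rewrite gmul1l. by rewrite IH gmulA. Qed.

Lemma insw_sound i w : gmul (v i) (wp w) =
  match insw i w with None => 0 | Some (s, w') => gscal (sg s) (wp w') end.
Proof.
elim: w => [|j w IH] /=; first by rewrite /sg gscal1.
case: ifP => _; first by rewrite /sg gscal1.
case: (PeanoNat.Nat.eqb_spec i j) => [<-|_].
  by rewrite -gmulA (gmul_odd_sq (vodd i)) gmul0l.
rewrite -gmulA (gmul_odd_anti (vodd i) (vodd j)) gmulNl gmulA IH.
case: (insw i w) => [[s w'']|]; last by rewrite gmul0r oppr0.
by rewrite gmulZr sgN gscalNl.
Qed.

Lemma nw_sound w : wp w =
  match nw w with None => 0 | Some (s, w') => gscal (sg s) (wp w') end.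
Proof.
elim: w => [|i w IH] /=; first by rewrite /sg gscal1.
rewrite IH; case: (nw w) => [[s w'']|]; last by rewrite gmul0r.
rewrite gmulZr insw_sound; case: (insw i w'') => [[s' w3]|]; last by rewrite gscalx0.
by rewrite gscalA sgX.
Qed.

Lemma eval_nil : eval [::] = 0.
Proof. by rewrite /eval big_nil. Qed.
Lemma eval_cons c w p : eval ((c, w) :: p) = gscal c%:~R (wp w) + eval p.
Proof. by rewrite /eval big_cons. Qed.

Lemma weqP u w : weq u w -> u = w.
Proof.
elim: u w => [|i u IH] [|j w] //= /andP [/PeanoNat.Nat.eqb_spec -> /IH ->] //.
Qed.

Lemma zeqzP c : zeqz c -> c = 0.
Proof. by case: c => [[]|]. Qed.

Lemma pins_sound c w p : eval (pins c w p) = gscal c%:~R (wp w) + eval p.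
Proof.
elim: p => [|[c' w'] p IH] /=; first by rewrite eval_cons.
case: ifP => [/weqP <-|_].
  case: ifP => [/zeqzP e|_]; last by rewrite !eval_cons intrD gscalDl addrA.
  by rewrite eval_cons addrA -gscalDl -intrD e gscal0 add0r.
case: ifP => _; first by rewrite !eval_cons.
by rewrite !eval_cons IH addrCA.
Qed.

Lemma padd_sound p q : eval (padd p q) = eval p + eval q.
Proof.
elim: p q => [|[c w] p IH] q /=; first by rewrite eval_nil add0r.
elim: q => [|[c' w'] q IHq]; first by rewrite eval_nil addr0.
case: ifP => [/weqP <-|_].
  case: ifP => [/zeqzP e|_].
    by rewrite IH !eval_cons addrACA -gscalDl -intrD e gscal0 add0r.
  by rewrite !eval_cons IH intrD gscalDl addrACA.
case: ifP => _; first by rewrite !eval_cons IH eval_cons addrA.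
by rewrite !eval_cons IHq eval_cons addrCA.
Qed.

Lemma prow_sound c w q : eval (prow (c, w) q) = gmul (gscal c%:~R (wp w)) (eval q).
Proof.
elim: q => [|[c' w'] q IH] /=; first by rewrite /prow /= eval_nil gmul0r.
rewrite eval_cons gmulDr -IH /prow /=.
rewrite gmulZl gmulZr gscalA -wp_cat nw_sound.
case: (nw (w ++ w')) => [[s w3]|]; last by rewrite gscalx0 add0r.
rewrite pins_sound gscalA !intrM sgzE; congr (gscal _ _ + _); ring.
Qed.

Lemma pmul_sound p q : eval (pmul p q) = gmul (eval p) (eval q).
Proof.
elim: p => [|[c w] p IH] /=; first by rewrite eval_nil gmul0l.
by rewrite padd_sound prow_sound IH eval_cons gmulDl.
Qed.

Lemma pscal_sound c p : eval (pscal c p) = gscal c%:~R (eval p).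
Proof.
rewrite /pscal; case: ifP => [/zeqzP ->|_]; first by rewrite gscal0 eval_nil.
rewrite /eval big_map gscal_sumr; apply: eq_bigr => t _.
by rewrite gscalA intrM.
Qed.

Lemma eval_foldr I (l : seq I) (G : I -> poly) :
  eval (foldr (fun i acc => padd (G i) acc) [::] l) = \sum_(i <- l) eval (G i).
Proof.
elim: l => [|i l IH] /=; first by rewrite eval_nil big_nil.
by rewrite padd_sound IH big_cons.
Qed.

Lemma sum4 (G : 'I_4 -> L) : \sum_(i < 4) G i = \sum_(i <- ords4) G i.
Proof.
rewrite !big_ord_recl big_ord0 /ords4 !big_cons big_nil.
by congr (G _ + (G _ + (G _ + (G _ + _)))); apply: val_inj.
Qed.
Lemma sum3 (G : 'I_3 -> L) : \sum_(i < 3) G i = \sum_(i <- ords3) G i.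
Proof.
rewrite !big_ord_recl big_ord0 /ords3 !big_cons big_nil.
by congr (G _ + (G _ + (G _ + _))); apply: val_inj.
Qed.

End Refl.

Section Den.
Variable R : realType.
Local Notation C := R[i].
Local Notation L := (Lam R).

Fixpoint den_c (c : coef) : C :=
  match c with
  | CNat n => n%:R
  | CNeg c => - den_c c
  | CMul c1 c2 => den_c c1 * den_c c2
  | CB2 a b => beta2 a b
  | CB4 a b c d => beta4 a b c d
  end.

Fixpoint den (vk : nat -> 'I_4 -> 'I_3 -> L) (K : 'I_4 -> 'I_4 -> L) (e : E) : L :=
  match e with
  | EV k a A => vk k a A
  | EK a b => K a b
  | EAdd e1 e2 => den vk K e1 + den vk K e2
  | ESub e1 e2 => den vk K e1 - den vk K e2
  | EMul e1 e2 => gmul (den vk K e1) (den vk K e2)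
  | EScal c e => gscal (den_c c) (den vk K e)
  | ESum4 F => \sum_(i < 4) den vk K (F i)
  | ESum3 F => \sum_(i < 3) den vk K (F i)
  end.

Hypothesis hbeta2 : forall a b : 'I_4, beta2 a b = (b2c a b)%:~R :> C.
Hypothesis hbeta4 : forall a b c d : 'I_4, beta4 a b c d = (b4c a b c d)%:~R :> C.

Lemma denc_sound c : den_c c = (cval c)%:~R.
Proof.
elim: c => [n|c IH|c1 IH1 c2 IH2|a b|a b c d] /=.
- by [].
- by rewrite IH rmorphN.
- by rewrite IH1 IH2 rmorphM.
- exact: hbeta2.
- exact: hbeta4.
Qed.

Variable vk : nat -> 'I_4 -> 'I_3 -> L.
Hypothesis vkodd : forall k a A, par true (vk k a A).

Definition vv (n : nat) : L := vk (n %/ 12) (inord ((n %% 12) %/ 3)) (inord (n %% 3)).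

Lemma vv_code k a A : vv (code k a A) = vk k a A.
Proof.
have hA : (A < 3)%N := ltn_ord A.
have ha : (a < 4)%N := ltn_ord a.
have h12 : (3 * a + A < 12)%N by lia.
rewrite /vv /code -addnA [(12 * k)%N]mulnC divnMDl // divn_small // addn0 modnMDl modn_small //.
rewrite [(3 * a)%N]mulnC divnMDl // divn_small // addn0.
have -> : (k * 12 + (a * 3 + A) = (k * 4 + a) * 3 + A)%N by lia.
rewrite modnMDl modn_small //.
by congr vk; apply: val_inj; rewrite /= inordK.
Qed.

Lemma vvodd n : par true (vv n).
Proof. exact: vkodd. Qed.

Variable K : 'I_4 -> 'I_4 -> L.

Lemma nf_sound kf : (forall a b, eval vv (kf a b) = K a b) ->
  forall e, eval vv (nf kf e) = den vk K e.
Proof.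
move=> hK; elim => [k a A|a b|e1 IH1 e2 IH2|e1 IH1 e2 IH2|e1 IH1 e2 IH2|c e IH|F IH|F IH] /=.
- by rewrite eval_cons eval_nil addr0 /wp /= gmul1r vv_code gscal1.
- exact: hK.
- by rewrite padd_sound IH1 IH2.
- by rewrite padd_sound pscal_sound IH1 IH2 rmorphN rmorph1 gscalNl gscal1.
- by rewrite (pmul_sound vvodd) IH1 IH2.
- rewrite denc_sound; case: ifP => [/zeqzP ->|_]; first by rewrite eval_nil gscal0.
  by rewrite pscal_sound IH.
- transitivity (\sum_(i <- ords4) eval vv (nf kf (F i))); first exact (@eval_foldr R vv _ ords4 (fun i => nf kf (F i))).
  by rewrite sum4; apply: eq_bigr => i _; exact: IH.
- transitivity (\sum_(i <- ords3) eval vv (nf kf (F i))); first exact (@eval_foldr R vv _ ords3 (fun i => nf kf (F i))).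
  by rewrite sum3; apply: eq_bigr => i _; exact: IH.
Qed.

End Den.

Lemma main_id (R : realType)
  (hbeta2 : forall a b : 'I_4, beta2 a b = (b2c a b)%:~R :> R[i])
  (hbeta4 : forall a b c d : 'I_4, beta4 a b c d = (b4c a b c d)%:~R :> R[i])
  (vk : nat -> 'I_4 -> 'I_3 -> Lam R) (vkodd : forall k a A, par true (vk k a A))
  (K : 'I_4 -> 'I_4 -> Lam R) :
  (forall a b, K a b = den vk K (eKf a b)) ->
  forall a b, den vk K (eL a b) = den vk K (eR a b).
Proof.
move=> hK a b.
have hkf : forall a' b', eval (vv vk) (kf0 a' b') = K a' b'.
  move=> a' b'; rewrite /kf0 hK.
  exact: (@nf_sound R hbeta2 hbeta4 vk vkodd (fun _ _ => 0) (fun _ _ => [::])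
            (fun _ _ => eval_nil _) (eKf a' b')).
by rewrite -!(nf_sound hbeta2 hbeta4 vkodd hkf) check_ok.
Qed.

Definition gz := (int * int)%type.
Definition gzadd (x y : gz) : gz := (x.1 + y.1, x.2 + y.2).
Definition gzmul (x y : gz) : gz := (x.1 * y.1 - x.2 * y.2, x.1 * y.2 + x.2 * y.1).
Definition gzconj (x : gz) : gz := (x.1, - x.2).
Definition gzneg (x : gz) : gz := (- x.1, - x.2).
Definition s4 (F : 'I_4 -> gz) : gz :=
  gzadd (F o40) (gzadd (F o41) (gzadd (F o42) (gzadd (F o43) (0, 0)))).

Definition sigmz (mu : 'I_4) (i j : nat) : gz :=
  match nat_of_ord mu, i, j with
  | 0, 0, 0 => (1, 0)%R | 0, 1, 1 => (1, 0)%R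
  | 1, 0, 1 => (1, 0)%R | 1, 1, 0 => (1, 0)%R
  | 2, 0, 1 => (0, -1)%R | 2, 1, 0 => (0, 1)%R
  | 3, 0, 0 => (1, 0)%R | 3, 1, 1 => (-1, 0)%R
  | _, _, _ => (0, 0)%R
  end%N.
Definition sigmtz (mu : 'I_4) (i j : nat) : gz :=
  if nat_of_ord mu == 0%N then sigmz mu i j else gzneg (sigmz mu i j).
Definition gamz (mu a b : 'I_4) : gz :=
  if ((a < 2) && (2 <= b))%N then sigmtz mu a (b - 2)
  else if ((2 <= a) && (b < 2))%N then sigmz mu (a - 2) b
  else (0, 0).
Definition eps2z (i j : nat) : gz :=
  match i, j with 0, 1 => (1, 0)%R | 1, 0 => (-1, 0)%R | _, _ => (0, 0)%R end%N.
Definition eps4z (a b : 'I_4) : gz :=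
  if ((a < 2) && (b < 2))%N then eps2z a b
  else if ((2 <= a) && (2 <= b))%N then gzneg (eps2z (a - 2) (b - 2))
  else (0, 0).
Definition gamlowz (mu c b : 'I_4) : gz := s4 (fun a => gzmul (gamz mu a b) (eps4z a c)).
Definition etaz (mu nu : 'I_4) : gz :=
  if mu == nu then (if nat_of_ord mu == 0%N then (1, 0) else (-1, 0)) else (0, 0).
Definition b4z (a b c d : 'I_4) : gz :=
  s4 (fun mu => gzmul (gzconj (s4 (fun nu => gzmul (etaz mu nu) (gamlowz nu a b))))
                      (gamlowz mu c d)).

Lemma b4z_all : all (fun a => all (fun b => all (fun c => all (fun d =>
   b4z a b c d == (2 * b4c a b c d, 0)) ords4) ords4) ords4) ords4.
Proof. vm_compute. reflexivity. Qed.

Lemma b4zE a b c d : b4z a b c d = (2 * b4c a b c d, 0).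
Proof.
apply/eqP; move: b4z_all.
move/allP/(_ a (mem_ords4 a))/allP/(_ b (mem_ords4 b))/allP/(_ c (mem_ords4 c)).
by move/allP/(_ d (mem_ords4 d)).
Qed.

Section Beta.
Variable R : realType.
Local Notation C := R[i].

Definition gi (z : gz) : C := Complex (z.1%:~R) (z.2%:~R).

Lemma gi_add x y : gi (gzadd x y) = gi x + gi y.
Proof. by rewrite /gi /= !intrD. Qed.
Lemma gi_mul x y : gi (gzmul x y) = gi x * gi y.
Proof. by rewrite /gi /= !intrD intrN !intrM. Qed.
Lemma gi_conj x : gi (gzconj x) = conjc (gi x).
Proof. by rewrite /gi /= intrN. Qed.
Lemma gi_neg x : gi (gzneg x) = - gi x.
Proof. by rewrite /gi /= !intrN. Qed.
Lemma gi0 : gi (0, 0) = 0.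
Proof. by []. Qed.

Lemma sum4C (G : 'I_4 -> C) : \sum_(i < 4) G i = G o40 + (G o41 + (G o42 + (G o43 + 0))).
Proof.
rewrite !big_ord_recl big_ord0.
by congr (G _ + (G _ + (G _ + (G _ + _)))); apply: val_inj.
Qed.

Lemma gi_s4 F : gi (s4 F) = \sum_(i < 4) gi (F i).
Proof. by rewrite sum4C /s4 !gi_add gi0. Qed.

Ltac cfin := try by []; apply/eqP; rewrite eq_complex /= ?oppr0 ?eqxx //.

Lemma sigm_gi mu i j : sigm R mu i j = gi (sigmz mu i j).
Proof.
rewrite /sigm /sigmz; case: (nat_of_ord mu) => [|[|[|[|m]]]];
  case: i => [|[|i]]; case: j => [|[|j]]; cfin.
Qed.

Lemma gam_gi mu a b : gam R mu a b = gi (gamz mu a b).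
Proof.
rewrite /gam /gamz /sigmt /sigmtz; case: ifP => _.
  by case: ifP => _; rewrite sigm_gi // gi_neg.
by case: ifP => _; rewrite ?sigm_gi.
Qed.

Lemma eps4_gi a b : eps4 R a b = gi (eps4z a b).
Proof.
rewrite /eps4 /eps4z; case: ifP => _.
  by rewrite /eps2 /eps2z; case: (nat_of_ord a) => [|[|?]]; case: (nat_of_ord b) => [|[|?]]; cfin.
case: ifP => _ //; rewrite gi_neg; congr (- _).
by rewrite /eps2 /eps2z; case: (a - 2)%N => [|[|?]]; case: (b - 2)%N => [|[|?]]; cfin.
Qed.

Lemma eta_gi mu nu : Defs.eta R mu nu = gi (etaz mu nu).
Proof. by rewrite /Defs.eta /etaz; case: ifP => _ //; case: ifP => _; cfin. Qed.

Lemma gamlow_gi mu c b : gamlow R mu c b = gi (gamlowz mu c b).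
Proof.
rewrite /gamlow /gamlowz gi_s4; apply: eq_bigr => a _.
by rewrite gi_mul gam_gi eps4_gi.
Qed.

Lemma intC (z : int) : (z%:~R : C) = Complex (z%:~R) 0.
Proof. by rewrite -[RHS]/((z%:~R : R)%:C)%C rmorph_int. Qed.

Lemma beta4_int a b c d : beta4 a b c d = (b4c a b c d)%:~R :> C.
Proof.
have -> : beta4 a b c d = 2^-1 * gi (b4z a b c d).
  rewrite /beta4 /b4z gi_s4; congr (_ * _); apply: eq_bigr => mu _.
  rewrite gi_mul gi_conj gi_s4 gamlow_gi; congr (conjc _ * _); apply: eq_bigr => nu _.
  by rewrite gi_mul eta_gi gamlow_gi.
rewrite b4zE /gi /= -intC intrM.
by rewrite mulrA mulVf ?mul1r // pnatr_eq0.
Qed.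

Lemma beta2_int a b : beta2 a b = (b2c a b)%:~R :> C.
Proof. by []. Qed.

End Beta.

Section Deriv.
Variable R : realType.
Local Notation C := R[i].
Local Notation L := (Lam R).
Local Notation V := 'rV[R]_4.
Variables (v x : V).

Definition RDer (f : V -> R) (d : R) := derivable f x v /\ 'D_v f x = d.

Lemma RDer_ext f g d : RDer f d -> f =1 g -> RDer g d.
Proof. by move=> h e; have <- : f = g by apply: funext. Qed.

Lemma RDer_add f g df dg : RDer f df -> RDer g dg -> RDer (fun y => f y + g y) (df + dg).
Proof.
move=> [hf <-] [hg <-]; split; first exact (derivableD hf hg).
exact (deriveD hf hg).
Qed.

Lemma RDer_sub f g df dg : RDer f df -> RDer g dg -> RDer (fun y => f y - g y) (df - dg).
Proof.
move=> [hf <-] [hg <-]; split; first exact (derivableB hf hg).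
exact (deriveB hf hg).
Qed.

Lemma RDer_mul f g df dg : RDer f df -> RDer g dg ->
  RDer (fun y => f y * g y) (df * g x + f x * dg).
Proof.
move=> [hf <-] [hg <-]; split; first exact (derivableM hf hg).
rewrite addrC [_ * g x]mulrC; exact (deriveM hf hg).
Qed.

Lemma RDer_cst (k : R) : RDer (fun _ => k) 0.
Proof. by split; [exact: derivable_cst | exact: derive_cst]. Qed.

Lemma ReD (z w : C) : complex.Re (z + w) = complex.Re z + complex.Re w.
Proof. by case: z; case: w. Qed.
Lemma ImD (z w : C) : complex.Im (z + w) = complex.Im z + complex.Im w.
Proof. by case: z; case: w. Qed.

Definition CDer (f : V -> C) (d : C) :=
  RDer (fun y => complex.Re (f y)) (complex.Re d) /\ RDer (fun y => complex.Im (f y)) (complex.Im d).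

Lemma CDer_ext f g d : CDer f d -> f =1 g -> CDer g d.
Proof. by move=> h e; have <- : f = g by apply: funext. Qed.

Lemma CDer_eq f d d' : d = d' -> CDer f d -> CDer f d'.
Proof. by move=> ->. Qed.

Lemma CDer_add f g df dg : CDer f df -> CDer g dg -> CDer (fun y => f y + g y) (df + dg).
Proof.
move=> [hf1 hf2] [hg1 hg2].
split; rewrite ?ReD ?ImD.
  have h := RDer_add hf1 hg1; apply: (RDer_ext h) => y /=; by case: (f y) => [? ?]; case: (g y).
have h := RDer_add hf2 hg2; apply: (RDer_ext h) => y /=; by case: (f y) => [? ?]; case: (g y).
Qed.

Lemma CDer_cst (k : C) : CDer (fun _ => k) 0.
Proof. by split; exact: RDer_cst. Qed.

Lemma CDer_mul f g df dg : CDer f df -> CDer g dg ->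
  CDer (fun y => f y * g y) (df * g x + f x * dg).
Proof.
move=> [hf1 hf2] [hg1 hg2]; split.
  have h := RDer_sub (RDer_mul hf1 hg1) (RDer_mul hf2 hg2).
  have -> : complex.Re (df * g x + f x * dg) =
     (complex.Re df * complex.Re (g x) + complex.Re (f x) * complex.Re dg) -
     (complex.Im df * complex.Im (g x) + complex.Im (f x) * complex.Im dg).
    by move: (df) (dg) (f x) (g x) => [? ?] [? ?] [? ?] [? ?] /=; ring.
  apply: (RDer_ext h) => y /=; by case: (f y) => [? ?]; case: (g y) => [? ?].
have h := RDer_add (RDer_mul hf1 hg2) (RDer_mul hf2 hg1).
have -> : complex.Im (df * g x + f x * dg) =
   (complex.Re df * complex.Im (g x) + complex.Re (f x) * complex.Im dg) +
   (complex.Im df * complex.Re (g x) + complex.Im (f x) * complex.Re dg).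
  by move: (df) (dg) (f x) (g x) => [? ?] [? ?] [? ?] [? ?] /=; ring.
apply: (RDer_ext h) => y /=; case: (f y) => [? ?]; case: (g y) => [? ?] /=; ring.
Qed.

Lemma CDer_conj f df : CDer f df -> CDer (fun y => conjc (f y)) (conjc df).
Proof.
move=> [h1 h2]; split.
  have -> : complex.Re (conjc df) = complex.Re df by case: (df).
  apply: (RDer_ext h1) => y; by case: (f y).
have h := RDer_sub (RDer_cst 0) h2.
have -> : complex.Im (conjc df) = 0 - complex.Im df by case: (df) => ? ? /=; rewrite sub0r.
apply: (RDer_ext h) => y /=; by case: (f y) => [? ?] /=; rewrite sub0r.
Qed.

Lemma CDer_sum I (r : seq I) (P : pred I) (f : I -> V -> C) (d : I -> C) :
  (forall i, CDer (f i) (d i)) ->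
  CDer (fun y => \sum_(i <- r | P i) f i y) (\sum_(i <- r | P i) d i).
Proof.
move=> h; elim: r => [|i r IH].
  have -> : (fun y => \sum_(i <- [::] | P i) f i y) = (fun _ => 0).
    by apply: funext => y; rewrite big_nil.
  rewrite big_nil; exact: CDer_cst.
case Pi: (P i).
  have -> : (fun y => \sum_(j <- i :: r | P j) f j y) =
            (fun y => f i y + \sum_(j <- r | P j) f j y).
    by apply: funext => y; rewrite big_cons Pi.
  rewrite big_cons Pi; exact: CDer_add.
have -> : (fun y => \sum_(j <- i :: r | P j) f j y) = (fun y => \sum_(j <- r | P j) f j y).
  by apply: funext => y; rewrite big_cons Pi.
by rewrite big_cons Pi.
Qed.

Definition LDer (F : V -> L) (D : L) := forall S, CDer (fun y => F y S) (D S).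

Lemma LDer_sum I (r : seq I) (P : pred I) (F : I -> V -> L) (D : I -> L) :
  (forall i, LDer (F i) (D i)) ->
  LDer (fun y => \sum_(i <- r | P i) F i y) (\sum_(i <- r | P i) D i).
Proof.
move=> h S.
have -> : (fun y => (\sum_(i <- r | P i) F i y) S) = (fun y => \sum_(i <- r | P i) F i y S).
  by apply: funext => y; rewrite sum_ffunE.
rewrite sum_ffunE.
exact: (@CDer_sum I r P (fun i y => F i y S) (fun i => D i S) (fun i => h i S)).
Qed.

Lemma LDer_gmul F G DF DG : LDer F DF -> LDer G DG ->
  LDer (fun y => gmul (F y) (G y)) (gmul DF (G x) + gmul (F x) DG).
Proof.
move=> hF hG U.
have h : forall S T, CDer (fun y => gsign R S T * F y S * G y T)
           (gsign R S T * DF S * G x T + gsign R S T * F x S * DG T).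
  move=> S T; apply: CDer_eq (CDer_mul (CDer_mul (CDer_cst _) (hF S)) (hG T)).
  by ring.
have -> : (fun y => gmul (F y) (G y) U) = (fun y => \sum_(S : {set Gen})
   \sum_(T : {set Gen} | [disjoint S & T] && (S :|: T == U)) gsign R S T * F y S * G y T).
  by apply: funext => y; rewrite gmulE.
have -> : (gmul DF (G x) + gmul (F x) DG) U = \sum_(S : {set Gen})
   \sum_(T : {set Gen} | [disjoint S & T] && (S :|: T == U))
     (gsign R S T * DF S * G x T + gsign R S T * F x S * DG T).
  by rewrite addLE !gmulE -big_split; apply: eq_bigr => S _; rewrite -big_split.
refine (@CDer_sum _ _ _ (fun (S : {set Gen}) y => \sum_(T : {set Gen} | [disjoint S & T] && (S :|: T == U))
            gsign R S T * F y S * G y T)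
         (fun (S : {set Gen}) => \sum_(T : {set Gen} | [disjoint S & T] && (S :|: T == U))
     (gsign R S T * DF S * G x T + gsign R S T * F x S * DG T)) _) => S.
exact: (@CDer_sum _ _ _ (fun (T : {set Gen}) y => gsign R S T * F y S * G y T) _ (fun T => h S T)).
Qed.

Lemma gconjE z U : gconj z U = \sum_(S : {set Gen}) conjc (z S) * conj_mono R S U.
Proof. by rewrite /gconj sum_ffunE; apply: eq_bigr => S _; rewrite gscalE. Qed.

Lemma LDer_gconj F D : LDer F D -> LDer (fun y => gconj (F y)) (gconj D).
Proof.
move=> hF U.
have h : forall S, CDer (fun y => conjc (F y S) * conj_mono R S U)
                       (conjc (D S) * conj_mono R S U).
  move=> S; apply: CDer_eq (CDer_mul (CDer_conj (hF S)) (CDer_cst _)).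
  by ring.
have -> : (fun y => gconj (F y) U) =
   (fun y => \sum_(S : {set Gen}) conjc (F y S) * conj_mono R S U).
  by apply: funext => y; rewrite gconjE.
rewrite gconjE.
exact: (@CDer_sum _ _ _ (fun (S : {set Gen}) y => conjc (F y S) * conj_mono R S U) _ h).
Qed.

End Deriv.

Lemma dL_LDer (R : realType) (mu : 'I_4) (F : 'rV[R]_4 -> Lam R) x D :
  LDer (evec R mu) x F D -> dL mu F x = D.
Proof.
move=> h; apply/ffunP => S; rewrite ffunE; have [[_ e1] [_ e2]] := h S.
by rewrite e1 e2; case: (D S).
Qed.

Lemma diff_LDer (R : realType) (mu : 'I_4) (F : 'rV[R]_4 -> Lam R) x :
  diff_field F -> LDer (evec R mu) x F (dL mu F x).
Proof.
move=> h S; have [h1 h2] := h x mu S; split; split => //; by rewrite ffunE.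
Qed.

Section Kf.
Variable R : realType.
Local Notation C := R[i].
Local Notation L := (Lam R).
Variables (g : R) (Amu : Gauge R) (psi : Field R).
Hypothesis herm : forall (mu : 'I_4) (x : 'rV[R]_4) (A B : 'I_3),
      conjc (Amu mu x A B) = Amu mu x B A.
Hypothesis hodd : forall (a : 'I_4) (A : 'I_3) (x : 'rV[R]_4), is_odd (psi a A x).
Hypothesis hdiff : forall (a : 'I_4) (A : 'I_3), diff_field (psi a A).
Variables (x : 'rV[R]_4) (mu : 'I_4).

Lemma dL_odd (F : 'rV[R]_4 -> L) : (forall y, is_odd (F y)) -> is_odd (dL mu F x).
Proof.
move=> h S hS; rewrite ffunE.
have -> : (fun y => complex.Re (F y S)) = (fun _ => 0) by apply: funext => y; rewrite h.
have -> : (fun y => complex.Im (F y S)) = (fun _ => 0) by apply: funext => y; rewrite h.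
by rewrite derive_cst.
Qed.

Lemma Dpsi_odd b A : par true (Dpsi g Amu psi mu b A x).
Proof.
apply: parD; first by apply/is_oddP; apply: dL_odd => y; exact: hodd.
by apply: par_sum => B _; apply: parZ; apply/is_oddP; exact: hodd.
Qed.

Lemma Kc_eq c b : Kc g Amu psi mu c b x =
  \sum_(A < 3) gscal 2 (gmul (gconj (psi c A x)) (Dpsi g Amu psi mu b A x)).
Proof.
have hJ : LDer (evec R mu) x (Jc psi c b)
   (\sum_(A < 3) (gmul (gconj (dL mu (psi c A) x)) (psi b A x) +
                  gmul (gconj (psi c A x)) (dL mu (psi b A) x))).
  apply: (@LDer_sum _ _ _ _ _ _ (fun A y => gmul (gconj (psi c A y)) (psi b A y))) => A.
  exact: (LDer_gmul (LDer_gconj (diff_LDer mu x (hdiff c A))) (diff_LDer mu x (hdiff b A))).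
set cc := fun A B : 'I_3 => iC R * Complex g 0 * Amu mu x A B.
have hc : forall A B, conjc (cc A B) = - cc B A.
  move=> A B; rewrite /cc -(herm mu x A B).
  case: (Amu mu x A B) => p q; rewrite /iC /=.
  by apply/eqP; rewrite eq_complex /=; apply/andP; split; apply/eqP; ring.
set pb := fun A => gconj (psi c A x).
set ps := fun A => psi b A x.
have e1 : forall A, gmul (pb A) (Dpsi g Amu psi mu b A x) =
    gmul (pb A) (dL mu (psi b A) x) + \sum_(B < 3) gscal (cc A B) (gmul (pb A) (ps B)).
  move=> A; rewrite /Dpsi gmulDr gmul_sumr; congr (_ + _); apply: eq_bigr => B _.
  by rewrite gmulZr.
have e2 : forall A, gmul (gconj (Dpsi g Amu psi mu c A x)) (ps A) =
    gmul (gconj (dL mu (psi c A) x)) (ps A) - \sum_(B < 3) gscal (cc B A) (gmul (pb B) (ps A)).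
  move=> A; rewrite /Dpsi gconjD gconj_sum gmulDl gmul_suml -sumrN; congr (_ + _).
  by apply: eq_bigr => B _; rewrite gconjZ gmulZl -/(cc A B) hc gscalNl.
rewrite /Kc /Cmu (dL_LDer hJ).
under eq_bigr => A _ do rewrite -/(pb A) -/(ps A) e1 e2.
under [in RHS]eq_bigr => A _ do rewrite -/(pb A) e1.
have hW : \sum_(A < 3) \sum_(B < 3) gscal (cc B A) (gmul (pb B) (ps A)) =
          \sum_(A < 3) \sum_(B < 3) gscal (cc A B) (gmul (pb A) (ps B)).
  by rewrite exchange_big.
rewrite -/pb -/ps.
rewrite -gscal_sumr !big_split /= sumrN sumrB /= hW /pb /ps.
apply/ffunP => S; rewrite !(addLE, subLE, oppLE, gscalE); ring.
Qed.

End Kf.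

Unset Implicit Arguments.

Theorem proposition1 (R : realType) (g : R) (Amu : Gauge R) (psi : Field R) :
  g != 0 ->
  (forall (mu : 'I_4) (x : 'rV[R]_4) (A B : 'I_3),
      conjc (Amu mu x A B) = Amu mu x B A) ->
  (forall (a : 'I_4) (A : 'I_3) (x : 'rV[R]_4), is_odd (psi a A x)) ->
  (forall (a : 'I_4) (A : 'I_3), diff_field (psi a A)) ->
  forall (x : 'rV[R]_4) (mu a b : 'I_4),
    gmul (X2 psi x) (Kc g Amu psi mu a b x)
    = gscal (-4)
        (\sum_(c < 4) \sum_(f < 4)
           gmul (Kc g Amu psi mu c b x)
             (gscal (beta2 c f : R[i])
                (gmul (J2 psi x) (Jc psi a f x)
                 + gscal 2 (\sum_(g0 < 4) \sum_(h < 4) \sum_(d < 4) \sum_(e < 4)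
                      gscal (beta4 g0 h d e)
                        (gmul (gmul (Jc psi g0 d x) (Jc psi h f x)) (Jc psi a e x))))))
      - gscal 8
        (\sum_(g0 < 4) \sum_(c < 4) \sum_(f < 4) \sum_(h < 4) \sum_(d < 4) \sum_(e < 4)
           gmul (Kc g Amu psi mu g0 b x)
             (gscal ((beta2 c f : R[i]) * beta4 g0 h d e)
                (gmul (gmul (Jc psi h e x) (Jc psi c f x)) (Jc psi a d x)
                 + gmul (gmul (Jc psi c d x) (Jc psi h f x)) (Jc psi a e x)
                 + gmul (gmul (Jc psi h d x) (Jc psi c e x)) (Jc psi a f x)))).
Proof.
move=> gnz herm hodd hdiff x mu a b.
have vkodd : forall k (a : 'I_4) (A : 'I_3), par true ((fun k (a : 'I_4) (A : 'I_3) => match k with 0%N => gconj (psi a A x) | 1%N => psi a A x | _ => Dpsi g Amu psi mu a A x end) k a A).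
  move=> [|[|k]] a' A' /=.
  - by apply/is_oddP; apply: gconj_odd; exact: hodd.
  - by apply/is_oddP; exact: hodd.
  - exact: Dpsi_odd.
have hK := @Kc_eq R g Amu psi herm hdiff x mu.
have := @main_id R (@beta2_int R) (@beta4_int R) _ vkodd (fun c b => Kc g Amu psi mu c b x) hK a b.
exact.
Qed.
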